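(* Consider, for a fixed time slot $t$ and a fixed degradation action, the convex bandwidth allocation problem $$\min_{\{b_{t,n}\},\{\tau^{\rm o}_{t,n}\}} \sum_{n=1}^N w_n \tau^{\rm o}_{t,n}\quad \text{s.t.}\quad \frac{d_{t,n}}{\tau^{\rm o}_{t,n}} \le b_{t,n} W \log_2\!\left(1+\frac{p_n h_{t,n}}{b_{t,n} W \delta^2}\right)\ \forall n,\quad \sum_{n=1}^N b_{t,n}\le 1,\quad b_{t,n}\ge 0,\ \tau^{\rm o}_{t,n}\ge 0\ \forall n.$$ Let $\phi_n\ge 0$ be the Lagrange multipliers of the per-device rate constraints and $\eta\ge 0$ the multiplier of the total bandwidth constraint, and let $\{\eta^\ast,\phi_n^\ast\}$ be the optimal dual variables (maximizers of the Lagrange dual function). Then the optimal solution $\{b_{t,n}^\ast, \tau^{\rm o\ast}_{t,n}\}$ of this problem has the closed-form structure $$\tau^{\rm o\ast}_{t,n} = \sqrt{\frac{\phi_n^\ast d_{t,n}}{w_n}},\qquad b_{t,n}^\ast = \frac{-p_n h_{t,n}}{W\delta^2\left[1+\left(\mathcal{W}\!\left(-\frac{1}{\exp\left(\frac{\eta^\ast \ln 2}{\phi_n^\ast W}+1\right)}\right)\right)^{-1}\right]},$$ where $\mathcal{W}(\cdot)$ is the Lambert-$\mathcal{W}$ function and $\exp(\cdot)$ is the exponential function.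
   Context: Edge inference system with $N$ edge devices offloading images to an edge server over FDMA with total bandwidth $W$; $b_{t,n}\ge 0$ is the fraction of bandwidth allocated to device $n$ in slot $t$, $p_n$ its fixed transmit power, $h_{t,n}$ its channel gain, $\delta^2$ the noise power spectral density, $d_{t,n}$ the offloaded data size in bits (determined by the fixed degradation action), $\tau^{\rm o}_{t,n}$ the offloading time, and $w_n\ge 0$ the latency weighting factor. *)

(* Defs.v *)
From HB Require Import structures.
From mathcomp Require Import all_boot all_order all_algebra.
From mathcomp Require Import all_classical all_reals.
From mathcomp Require Import ereal sequences exp.
Set Implicit Arguments. Unset Strict Implicit. Unset Printing Implicit Defensive.
Import Order.TTheory GRing.Theory Num.Theory.
Local Open Scope classical_set_scope.
Local Open Scope ring_scope.

(* Principal branch W_0 of the Lambert W function: for x >= -1/e, the unique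
   w >= -1 with w * e^w = x (chosen by xget; default 0 outside the domain). *)
Definition LambertW {R : realType} (x : R) : R :=
  xget 0 [set w : R | -1 <= w /\ w * expR w = x].

Definition log2 {R : realType} (x : R) : R := ln x / ln 2.

Definition rate {R : realType} (W dl2 p h b : R) : R :=
  b * W * log2 (1 + p * h / (b * W * dl2)).

Section Problem.
Context {R : realType} {N : nat}.
Variables (W dl2 : R) (p h d w : 'I_N -> R).

Definition objective (tau : 'I_N -> R) : R := \sum_(n < N) w n * tau n.

(* feasible set; offloading times are required positive so that d/tau is defined *)
Definition feasible (b tau : 'I_N -> R) : Prop :=
  (forall n, 0 <= b n) /\ (forall n, 0 < tau n) /\ (\sum_(n < N) b n <= 1) /\
  (forall n, d n / tau n <= rate W dl2 (p n) (h n) (b n)).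

Definition primal_optimal (b tau : 'I_N -> R) : Prop :=
  feasible b tau /\
  forall b' tau', feasible b' tau' -> objective tau <= objective tau'.

Definition lagrangian (b tau phi : 'I_N -> R) (eta : R) : R :=
  objective tau
  + \sum_(n < N) phi n * (d n / tau n - rate W dl2 (p n) (h n) (b n))
  + eta * (\sum_(n < N) b n - 1).

Definition dual_fun (phi : 'I_N -> R) (eta : R) : \bar R :=
  ereal_inf [set x : \bar R | exists b tau : 'I_N -> R,
     (forall n, 0 <= b n) /\ (forall n, 0 < tau n) /\
     x = (lagrangian b tau phi eta)%:E].

Definition dual_optimal (phi : 'I_N -> R) (eta : R) : Prop :=
  (forall n, 0 <= phi n) /\ 0 <= eta /\
  forall phi' eta', (forall n, 0 <= phi' n) -> 0 <= eta' ->
    (dual_fun phi' eta' <= dual_fun phi eta)%E.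

End Problem.

(* Main.v *)
Require Import Defs.
From HB Require Import structures.
From mathcomp Require Import all_boot all_order all_algebra.
From mathcomp Require Import all_classical all_reals.
From mathcomp Require Import ereal sequences exp derive realfun.
From mathcomp Require Import ring lra topology normedtype.
Import numFieldNormedType.Exports.
Import Order.TTheory GRing.Theory Num.Theory.
Local Open Scope ring_scope.

Section Aux.
Context {R : realType}.
Implicit Types a x u v : R.

Definition rr a x := x * (ln (x + a) - ln x).
Definition sa a x := ln (x + a) - ln x - a / (x + a).

Lemma ln_sub_le u v : 0 < u -> 0 < v -> ln u - ln v <= u / v - 1.
Proof.
move=> u0 v0; rewrite -ln_div ?posrE //.
set z := u / v - 1; have -> : u / v = 1 + z by rewrite /z; ring.
apply: le_ln1Dx; rewrite /z; have : 0 < u / v by apply: divr_gt0.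
lra.
Qed.

Lemma ln_sub_lt u v : 0 < u -> 0 < v -> u != v -> ln u - ln v < u / v - 1.
Proof.
move=> u0 v0 uv; rewrite -ln_div ?posrE //.
set z := u / v - 1; have -> : u / v = 1 + z by rewrite /z; ring.
have z0 : z != 0.
  rewrite /z subr_eq0; apply/eqP => /(congr1 (fun t => t * v)).
  rewrite divfK ?gt_eqF // mul1r => E; move: uv; rewrite E eqxx //.
have z1 : 0 < 1 + z.
  rewrite /z; have : 0 < u / v by apply: divr_gt0.
  lra.
rewrite -[ltRHS]expRK ltr_ln ?posrE ?expR_gt0 //.
exact: expR_gt1Dx.
Qed.

Lemma rr_tangent a x0 x : 0 < a -> 0 < x0 -> 0 <= x ->
  rr a x <= rr a x0 + sa a x0 * (x - x0).
Proof.
move=> a0 x00; rewrite le_eqVlt => /orP[/eqP <-|x0'].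
  rewrite /rr /sa mul0r.
  have -> : x0 * (ln (x0 + a) - ln x0) + (ln (x0 + a) - ln x0 - a / (x0 + a)) * (0 - x0)
     = x0 * (a / (x0 + a)) by ring.
  by apply: mulr_ge0; [lra| apply: divr_ge0; lra].
have H := @ln_sub_le ((x + a) * x0) (x * (x0 + a)).
rewrite !lnM ?posrE in H; try (apply: mulr_gt0; lra); try lra.
have H2 : x * (ln (x + a) + ln x0 - (ln x + ln (x0 + a))) <=
          x * ((x + a) * x0 / (x * (x0 + a)) - 1).
  by rewrite ler_pM2l // H //; apply: mulr_gt0; lra.
have E : x * ((x + a) * x0 / (x * (x0 + a)) - 1) = (x0 - x) * (a / (x0 + a)).
  by field; apply/andP; split; apply: lt0r_neq0; lra.
rewrite E in H2; rewrite /rr /sa.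
lra.
Qed.

Lemma sa_pos a x : 0 < a -> 0 < x -> 0 < sa a x.
Proof.
move=> a0 x0; have H := @ln_sub_lt x (x + a).
have E : x / (x + a) - 1 = - (a / (x + a)) by field; apply: lt0r_neq0; lra.
rewrite E in H; rewrite /sa.
have : ln x - ln (x + a) < - (a / (x + a)).
  apply: H; try lra; rewrite lt_eqF //; lra.
lra.
Qed.

Lemma rr_pos a x : 0 < a -> 0 < x -> 0 < rr a x.
Proof.
move=> a0 x0; rewrite /rr mulr_gt0 // subr_gt0 ltr_ln ?posrE; lra.
Qed.

Lemma rr_mono a x y : 0 < a -> 0 < x -> x < y -> rr a x < rr a y.
Proof.
move=> a0 x0 xy; have y0 : 0 < y by lra.
have H := @rr_tangent a y x a0 y0 (ltW x0).
have s0 := @sa_pos a y a0 y0.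
have : 0 < sa a y * (y - x) by apply: mulr_gt0; lra.
lra.
Qed.

Lemma is_derive_rr a x : 0 < a -> 0 < x -> is_derive x 1 (rr a) (sa a x).
Proof.
move=> a0 x0.
have Hs : is_derive x 1 (shift a) 1 := is_derive_shift _ _ _.
have Hl : is_derive (x + a) 1 (@ln R) (x + a)^-1 by apply: is_derive1_ln; lra.
have H1 := @is_derive1_comp R (@ln R) (shift a) x _ _ Hl Hs.
have H2 : is_derive x 1 (fun y : R => ln y) x^-1 by apply: is_derive1_ln.
have H3 := is_deriveB H1 H2.
have H4 := is_deriveM (is_derive_id x 1) H3.
have E : x *: ((x + a)^-1 * 1 - x^-1) +
       ((ln (R:=R) \o shift a - [eta ln (R:=R)]) x)%:A = sa a x.
  rewrite /GRing.scale /= .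
  have -> : (ln (R:=R) \o shift a - [eta ln (R:=R)]) x = ln (x + a) - ln x by [].
  rewrite /sa mulr1.
  field; apply/andP; split; apply: lt0r_neq0; lra.
rewrite E in H4.
apply: (near_eq_is_derive _ H4).
near=> y.
rewrite /rr.
by [].
Unshelve. all: by end_near.
Qed.

Lemma der_inv_rr a c x : 0 < a -> 0 < x ->
  is_derive x 1 (fun y => c * (rr a y)^-1) (- c * sa a x / (rr a x) ^+ 2).
Proof.
move=> a0 x0.
have H1 := is_deriveV (lt0r_neq0 (@rr_pos a x a0 x0)) (@is_derive_rr a x a0 x0).
have H2 := is_deriveZ c H1.
have E : c *: (- (rr a x) ^- 2 *: sa a x) = - c * sa a x / (rr a x) ^+ 2.
  rewrite /GRing.scale /=; field; exact: lt0r_neq0 (@rr_pos a x a0 x0).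
rewrite E in H2.
apply: (near_eq_is_derive _ H2).
near=> y.
by [].
Unshelve. all: by end_near.
Qed.

Lemma der_refl (f : R -> R) S x df : is_derive (S - x) 1 f df ->
  is_derive x 1 (fun y => f (S - y)) (- df).
Proof.
move=> Hf.
have Hg : is_derive x 1 (fun y : R => S - y) (-1).
  have H := is_deriveB (is_derive_cst S x 1) (is_derive_id x 1).
  rewrite sub0r in H.
  apply: (near_eq_is_derive _ H).
  near=> y; by [].
have H := @is_derive1_comp R f (fun y : R => S - y) x _ _ Hf Hg.
rewrite mulrN1 in H.
apply: (near_eq_is_derive _ H).
near=> y; by [].
Unshelve. all: by end_near.
Qed.

Lemma der_lin_rr a e k x : 0 < a -> 0 < x ->
  is_derive x 1 (fun y => e * y - k * rr a y) (e - k * sa a x).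
Proof.
move=> a0 x0.
have H1 := is_deriveZ e (is_derive_id x 1).
have H2 := is_deriveZ k (@is_derive_rr a x a0 x0).
have H := is_deriveB H1 H2.
have E : e *: (1:R) - k *: sa a x = e - k * sa a x by rewrite /GRing.scale /= mulr1.
rewrite E in H.
apply: (near_eq_is_derive _ H).
near=> y; by [].
Unshelve. all: by end_near.
Qed.

Lemma fermat (f : R -> R) lo hi c df :
  (forall t, lo < t < hi -> derivable f t 1) -> lo < c < hi ->
  is_derive c 1 f df -> (forall t, lo < t < hi -> f c <= f t) -> df = 0.
Proof.
move=> fd cin Hd fmin.
have H0 : is_derive c 1 f 0.
  apply: (@derive1_at_min R f lo hi c).
  - case/andP: cin => ? ?; apply: ltW; apply: lt_trans; eassumption.
  - by move=> t; rewrite in_itv /= => /fd.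
  - by rewrite in_itv /=.
  - by move=> t; rewrite in_itv /= => /fmin.
have E1 : 'D_1 f c = df by apply: derive_val.
have E2 : 'D_1 f c = 0 by apply: derive_val.
by rewrite -E1 E2.
Qed.

Lemma wexp_lt u v : -1 <= u -> u < v -> u * expR u < v * expR v.
Proof.
move=> u1 uv.
have ev : 0 < expR v := expR_gt0 v.
have [u0|u0] := ltP u 0.
  have E : expR u = expR (u - v) * expR v by rewrite -expRD subrK.
  have H1 : 1 + (u - v) < expR (u - v) by apply: expR_gt1Dx; rewrite subr_eq0 lt_eqF.
  have H2 : u * expR (u - v) < u * (1 + (u - v)) by rewrite ltr_nM2l.
  have H3 : u * (1 + (u - v)) <= v by nra.
  rewrite E mulrA ltr_pM2r //; lra.
have H1 : u * expR u <= u * expR v by rewrite ler_wpM2l // ler_expR ltW.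
have H2 : u * expR v < v * expR v by rewrite ltr_pM2r.
lra.
Qed.

Lemma LambertW_eq v : -1 <= v -> LambertW (v * expR v) = v.
Proof.
move=> v1; rewrite /LambertW; apply: xget_unique; first by split.
move=> y [y1 yE]; apply/eqP; rewrite eq_le; apply/andP; split; rewrite leNgt; apply/negP.
- by move=> /(@wexp_lt v y v1); rewrite yE ltxx.
- by move=> /(@wexp_lt y v y1); rewrite yE ltxx.
Qed.
End Aux.

Definition upd {R : Type} {N : nat} (f : 'I_N -> R) (n : 'I_N) (t : R) : 'I_N -> R :=
  fun k => if k == n then t else f k.

Lemma sum_change (R : realType) (N : nat) (F F' : 'I_N -> R) (n : 'I_N) :
  (forall k, k != n -> F' k = F k) -> \sum_k F' k = \sum_k F k + (F' n - F n).
Proof.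
move=> HF; rewrite (bigD1 n) //= [in RHS](bigD1 n) //=.
rewrite (eq_bigr F) => [|k /HF //].
lra.
Qed.

Section Main.
Variables (R : realType) (N : nat) (W dl2 : R) (p h d w : 'I_N -> R).
Hypotheses (HW : 0 < W) (Hdl2 : 0 < dl2)
  (Hp : forall n, 0 < p n) (Hh : forall n, 0 < h n)
  (Hd : forall n, 0 < d n) (Hw : forall n, 0 < w n).

Definition aa k := p k * h k / (W * dl2).
Definition KK := W / ln (2:R).
Definition rt k x := rate W dl2 (p k) (h k) x.

Lemma aa_pos k : 0 < aa k.
Proof. by rewrite /aa divr_gt0 // mulr_gt0. Qed.

Lemma ln2_pos : 0 < ln (2:R).
Proof. by apply: ln_gt0; lra. Qed.

Lemma KK_pos : 0 < KK.
Proof. by rewrite /KK divr_gt0 // ln2_pos. Qed.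

Lemma rt_rr k x : 0 <= x -> rt k x = KK * rr (aa k) x.
Proof.
rewrite le_eqVlt => /orP[/eqP <-|x0].
  by rewrite /rt /rate /rr !mul0r mulr0.
rewrite /rt /rate /rr /log2 /KK /aa.
have E : 1 + p k * h k / (x * W * dl2) = (x + p k * h k / (W * dl2)) / x.
  by field; rewrite !lt0r_neq0 //.
rewrite E ln_div ?posrE //; last by have := aa_pos k; rewrite /aa; lra.
by field; rewrite lt0r_neq0 // ln2_pos.
Qed.

Lemma rt_pos k x : 0 < x -> 0 < rt k x.
Proof. by move=> x0; rewrite rt_rr ?ltW // mulr_gt0 ?KK_pos ?rr_pos ?aa_pos. Qed.

Lemma rt0 k : rt k 0 = 0.
Proof. by rewrite /rt /rate !mul0r. Qed.

Lemma rt_mono k x y : 0 < x -> x < y -> rt k x < rt k y.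
Proof.
move=> x0 xy; rewrite !rt_rr ?ltW //; last by lra.
by rewrite ltr_pM2l ?KK_pos // rr_mono ?aa_pos.
Qed.

Definition sg k x := KK * sa (aa k) x.

Lemma rt_tangent k x0 x : 0 < x0 -> 0 <= x -> rt k x <= rt k x0 + sg k x0 * (x - x0).
Proof.
move=> x00 x0'; rewrite (rt_rr k x x0') (rt_rr k x0 (ltW x00)) /sg.
have H := @rr_tangent _ (aa k) x0 x (aa_pos k) x00 x0'.
have := ler_wpM2l (ltW KK_pos) H.
rewrite mulrDr; lra.
Qed.

Lemma sg_pos k x : 0 < x -> 0 < sg k x.
Proof. by move=> x0; rewrite /sg mulr_gt0 ?KK_pos ?sa_pos ?aa_pos. Qed.

Lemma lagr_sum b tau phi eta :
  lagrangian W dl2 p h d w b tau phi eta =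
  \sum_k (w k * tau k + phi k * (d k / tau k - rt k (b k)) + eta * b k) - eta.
Proof.
rewrite /lagrangian /objective !big_split /= -mulr_sumr /rt; lra.
Qed.


Lemma obj_upd tau k t :
  objective w (upd tau k t) = objective w tau + (w k * t - w k * tau k).
Proof.
rewrite /objective (@sum_change _ _ (fun j => w j * tau j) (fun j => w j * upd tau k t j) k).
  by rewrite /upd eqxx.
by move=> j /negbTE jk; rewrite /upd jk.
Qed.

Lemma sumb_upd (b : 'I_N -> R) k t :
  \sum_j upd b k t j = \sum_j b j + (t - b k).
Proof.
rewrite (@sum_change _ _ b (upd b k t) k); first by rewrite /upd eqxx.
by move=> j /negbTE jk; rewrite /upd jk.
Qed.

Lemma divdiv (x y : R) : 0 < x -> 0 < y -> x / (x / y) = y.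
Proof. by move=> x0 y0; field; apply/andP; split; apply: lt0r_neq0. Qed.

Lemma upd_eq (f : 'I_N -> R) k t : upd f k t k = t.
Proof. by rewrite /upd eqxx. Qed.

Lemma upd_neq (f : 'I_N -> R) k t j : j != k -> upd f k t j = f j.
Proof. by move=> /negbTE jk; rewrite /upd jk. Qed.

Variables (bs taus : 'I_N -> R).
Hypothesis Hopt : primal_optimal W dl2 p h d w bs taus.

Lemma Hb0 k : 0 <= bs k. Proof. by case: Hopt => [[H _] _]. Qed.
Lemma Ht0 k : 0 < taus k. Proof. by case: Hopt => [[_ [H _]] _]. Qed.
Lemma Hsum : \sum_k bs k <= 1. Proof. by case: Hopt => [[_ [_ [H _]]] _]. Qed.
Lemma Hc k : d k / taus k <= rt k (bs k). Proof. by case: Hopt => [[_ [_ [_ H]]] _]. Qed.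
Lemma Hmin b' tau' : feasible W dl2 p h d b' tau' -> objective w taus <= objective w tau'.
Proof. by case: Hopt => _ H; apply: H. Qed.

Lemma bs_pos k : 0 < bs k.
Proof.
have := Hc k; have := Hb0 k; rewrite le_eqVlt => /orP[/eqP E|//].
rewrite -E rt0 => H; have : 0 < d k / taus k by rewrite divr_gt0 // Ht0.
lra.
Qed.

Lemma tight k : d k / taus k = rt k (bs k).
Proof.
apply/eqP; rewrite eq_le Hc /= leNgt; apply/negP => lt.
have rpos := @rt_pos k _ (bs_pos k).
set t := d k / rt k (bs k).
have tpos : 0 < t by rewrite divr_gt0.
have tlt : t < taus k.
  rewrite /t ltr_pdivrMr //; rewrite ltr_pdivrMr ?Ht0 // in lt; lra.
have F : feasible W dl2 p h d bs (upd taus k t).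
  split; first exact: Hb0.
  split; first by move=> j; rewrite /upd; case: ifP => _ //; exact: Ht0.
  split; first exact: Hsum.
  move=> j; rewrite /upd; case: ifP => [/eqP ->|_]; last exact: Hc.
  by rewrite /t divdiv.
have := Hmin _ _ F; rewrite obj_upd.
have : w k * t < w k * taus k by rewrite ltr_pM2l.
lra.
Qed.

Lemma sum1 (n0 : 'I_N) : \sum_k bs k = 1.
Proof.
apply/eqP; rewrite eq_le Hsum /= leNgt; apply/negP => lt.
set del := 1 - \sum_k bs k.
have dpos : 0 < del by rewrite /del; lra.
set b' := upd bs n0 (bs n0 + del).
have b0 := bs_pos n0.
have rpos := @rt_pos n0 _ (bs_pos n0).
have rlt : rt n0 (bs n0) < rt n0 (bs n0 + del) by apply: rt_mono => //; lra.
have rpos' : 0 < rt n0 (bs n0 + del) by lra.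
set t := d n0 / rt n0 (bs n0 + del).
have tpos : 0 < t by rewrite divr_gt0.
have tlt : t < taus n0.
  have E := tight n0.
  have : taus n0 = d n0 / rt n0 (bs n0).
    by rewrite -E divdiv // Ht0.
  move=> ->; rewrite /t ltr_pM2l ?Hd // ltf_pV2 ?posrE //.
have F : feasible W dl2 p h d b' (upd taus n0 t).
  split; first by move=> j; rewrite /b' /upd; case: ifP => _; [lra| exact: Hb0].
  split; first by move=> j; rewrite /upd; case: ifP => _ //; exact: Ht0.
  split; first by rewrite /b' sumb_upd; rewrite /del; lra.
  move=> j; rewrite /b' /upd; case: ifP => [/eqP ->|_]; last exact: Hc.
  by rewrite /t divdiv.
have := Hmin _ _ F; rewrite obj_upd.
have : w n0 * t < w n0 * taus n0 by rewrite ltr_pM2l.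
lra.
Qed.

Definition phi0 k := w k * taus k ^+ 2 / d k.

Lemma taus_rr k : taus k = d k / (KK * rr (aa k) (bs k)).
Proof.
have E := tight k; rewrite rt_rr ?(ltW (bs_pos k)) // in E.
rewrite -E divdiv ?Ht0 //.
Qed.

Lemma conv k : phi0 k * sg k (bs k) =
  (w k * d k / KK) * sa (aa k) (bs k) / (rr (aa k) (bs k)) ^+ 2.
Proof.
rewrite /phi0 /sg taus_rr.
have r0 := @rr_pos _ (aa k) (bs k) (aa_pos k) (bs_pos k).
have K0 := KK_pos.
field; rewrite !lt0r_neq0 //.
Qed.

Lemma Gmin n m x : m != n -> 0 < x -> x < bs n + bs m ->
  w n * taus n + w m * taus m <=
  w n * (d n / rt n x) + w m * (d m / rt m (bs n + bs m - x)).
Proof.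
move=> mn x0 xS.
set S := bs n + bs m.
have y0 : 0 < S - x by rewrite /S in xS *; lra.
set tn := d n / rt n x; set tm := d m / rt m (S - x).
have rn := @rt_pos n x x0; have rm := @rt_pos m (S - x) y0.
have tn0 : 0 < tn by rewrite divr_gt0.
have tm0 : 0 < tm by rewrite divr_gt0.
set b' := upd (upd bs n x) m (S - x).
set tau' := upd (upd taus n tn) m tm.
have F : feasible W dl2 p h d b' tau'.
  split.
    move=> j; rewrite /b' /upd; case: ifP => _; first lra.
    by case: ifP => _; [lra | exact: Hb0].
  split.
    move=> j; rewrite /tau' /upd; case: ifP => _ //.
    by case: ifP => _ //; exact: Ht0.
  split.
    rewrite /b' !sumb_upd (upd_neq _ _ _ _ mn) /S; have := Hsum; lra.
  move=> j; rewrite /b' /tau' /upd; case: ifP => [/eqP ->|_].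
    by rewrite /tm divdiv.
  case: ifP => [/eqP ->|_]; last exact: Hc.
  by rewrite /tn divdiv.
have := Hmin _ _ F; rewrite /tau' !obj_upd (upd_neq _ _ _ _ mn).
lra.
Qed.

Lemma wrt k x : 0 < x -> w k * (d k / rt k x) = (w k * d k / KK) * (rr (aa k) x)^-1.
Proof.
move=> x0; rewrite rt_rr ?ltW //.
have r0 := @rr_pos _ (aa k) x (aa_pos k) x0.
have K0 := KK_pos.
field; rewrite !lt0r_neq0 //.
Qed.

Lemma marg n m : m != n -> phi0 m * sg m (bs m) = phi0 n * sg n (bs n).
Proof.
move=> mn; rewrite !conv.
set S := bs n + bs m.
set cn := w n * d n / KK; set cm := w m * d m / KK.
pose G := fun x => cn * (rr (aa n) x)^-1 + cm * (rr (aa m) (S - x))^-1.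
pose dG := fun x => - cn * sa (aa n) x / (rr (aa n) x)^+2 -
                    (- cm * sa (aa m) (S - x) / (rr (aa m) (S - x))^+2).
have bn := bs_pos n; have bm := bs_pos m.
have HD : forall x, 0 < x < S -> is_derive x 1 G (dG x).
  move=> x /andP[x0 xS].
  have y0 : 0 < S - x by lra.
  have H1 := @der_inv_rr _ (aa n) cn x (aa_pos n) x0.
  have H2 := @der_inv_rr _ (aa m) cm (S - x) (aa_pos m) y0.
  have H3 := @der_refl _ _ S x _ H2.
  have H4 := is_deriveD H1 H3.
  apply: (near_eq_is_derive _ H4).
  near=> y; by [].
have Hf := @fermat _ G 0 S (bs n) (dG (bs n)).
have E : dG (bs n) = 0.
  apply: Hf.
  - by move=> t /HD H; apply: ex_derive.
  - by rewrite /S; apply/andP; split; lra.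
  - by apply: HD; rewrite /S; apply/andP; split; lra.
  move=> t /andP[t0 tS].
  have := @Gmin n m t mn t0 tS.
  rewrite /G -/S (@wrt n t t0) (@wrt m (S - t)); last by lra.
  have -> : S - bs n = bs m by rewrite /S; lra.
  rewrite !taus_rr /cn /cm.
  have r0 := @rr_pos _ (aa n) (bs n) (aa_pos n) bn.
  have r1 := @rr_pos _ (aa m) (bs m) (aa_pos m) bm.
  have K0 := KK_pos.
  have -> : w n * (d n / (KK * rr (aa n) (bs n))) = w n * d n / KK * (rr (aa n) (bs n))^-1.
    by field; rewrite !lt0r_neq0.
  have -> : w m * (d m / (KK * rr (aa m) (bs m))) = w m * d m / KK * (rr (aa m) (bs m))^-1.
    by field; rewrite !lt0r_neq0.
  by [].
move: E; rewrite /dG.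
have -> : S - bs n = bs m by rewrite /S; lra.
lra.
Unshelve. all: by end_near.
Qed.

Definition eta0 n := phi0 n * sg n (bs n).

Lemma phi0_pos k : 0 < phi0 k.
Proof. by rewrite /phi0 divr_gt0 // mulr_gt0 // exprn_gt0 // Ht0. Qed.

Lemma eta0_pos n : 0 < eta0 n.
Proof. by rewrite /eta0 mulr_gt0 ?phi0_pos ?sg_pos ?bs_pos. Qed.

Lemma marg' n k : phi0 k * sg k (bs k) = eta0 n.
Proof. by have [->|kn] := eqVneq k n; [by [] | exact: marg]. Qed.

Lemma amgm (a t t0 : R) : 0 < a -> 0 < t -> 0 < t0 ->
  2 * (a * t0) <= a * t + a * t0 ^+ 2 / t.
Proof.
move=> a0 t0' t00.
have H : 0 <= a * (t - t0) ^+ 2 / t.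
  apply: divr_ge0; [apply: mulr_ge0; [lra| exact: sqr_ge0] | lra].
have E : a * (t - t0) ^+ 2 / t = a * t + a * t0 ^+ 2 / t - 2 * (a * t0).
  by field; rewrite lt0r_neq0.
lra.
Qed.

Lemma term_lb n k (bk t : R) : 0 <= bk -> 0 < t ->
  w k * taus k + eta0 n * bs k <=
  w k * t + phi0 k * (d k / t - rt k bk) + eta0 n * bk.
Proof.
move=> b0 t0.
have i := @amgm (w k) t (taus k) (Hw k) t0 (Ht0 k).
have E1 : phi0 k * (d k / t) = w k * taus k ^+ 2 / t.
  by rewrite /phi0; field; rewrite !lt0r_neq0 ?Hd.
have ii := @rt_tangent k (bs k) bk (bs_pos k) b0.
have ii' := ler_wpM2l (ltW (phi0_pos k)) ii.
rewrite mulrDr [phi0 k * (sg k _ * _)]mulrA (marg' n k) in ii'.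
have iii : phi0 k * rt k (bs k) = w k * taus k.
  rewrite -tight /phi0; have := Ht0 k; have := Hd k => ? ?.
  by field; rewrite !lt0r_neq0.
rewrite iii in ii'; rewrite mulrDr mulrN E1.
lra.
Qed.

Lemma dual_lb n : ((objective w taus)%:E <= dual_fun W dl2 p h d w phi0 (eta0 n))%E.
Proof.
apply: le_ereal_inf_tmp => x [b [tau [Hb [Ht ->]]]].
rewrite lee_fin lagr_sum.
have H : \sum_k (w k * taus k + eta0 n * bs k) <=
         \sum_k (w k * tau k + phi0 k * (d k / tau k - rt k (b k)) + eta0 n * b k).
  by apply: ler_sum => k _; apply: term_lb.
rewrite big_split /= -mulr_sumr (sum1 n) mulr1 in H.
rewrite /objective; lra.
Qed.

Variables (phis : 'I_N -> R) (etas : R).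
Hypothesis Hdual : dual_optimal W dl2 p h d w phis etas.

Lemma phis_ge0 k : 0 <= phis k. Proof. by case: Hdual. Qed.

Lemma Lmin (n : 'I_N) (b tau : 'I_N -> R) : (forall k, 0 <= b k) -> (forall k, 0 < tau k) ->
  lagrangian W dl2 p h d w bs taus phis etas <= lagrangian W dl2 p h d w b tau phis etas.
Proof.
move=> Hb Ht.
have LP : lagrangian W dl2 p h d w bs taus phis etas = objective w taus.
  rewrite /lagrangian (sum1 n) subrr mulr0 addr0 big1 ?addr0 //.
  by move=> k _; rewrite tight /rt subrr mulr0.
case: Hdual => [Hphi [Heta Hd']].
have H1 := Hd' phi0 (eta0 n) (fun k => ltW (phi0_pos k)) (ltW (eta0_pos n)).
have H2 := dual_lb n.
have H3 : (dual_fun W dl2 p h d w phis etas <= (lagrangian W dl2 p h d w b tau phis etas)%:E)%E.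
  by apply: ereal_inf_lbound; exists b, tau.
rewrite LP -lee_fin; apply: le_trans H2 _; apply: le_trans H1 _; exact: H3.
Qed.

Lemma tau_res n : taus n = Num.sqrt (phis n * d n / w n).
Proof.
have Ft : forall t, 0 < t -> w n * taus n + phis n * (d n / taus n) <= w n * t + phis n * (d n / t).
  move=> t t0.
  have Hu : forall k, 0 < upd taus n t k.
    by move=> k; rewrite /upd; case: ifP => _ //; exact: Ht0.
  have := @Lmin n bs (upd taus n t) Hb0 Hu.
  rewrite !lagr_sum.
  rewrite (@sum_change _ _ (fun k => w k * taus k + phis k * (d k / taus k - rt k (bs k)) + etas * bs k)
     (fun k => w k * upd taus n t k + phis k * (d k / upd taus n t k - rt k (bs k)) + etas * bs k) n).
  - rewrite upd_eq; lra.
  - by move=> k kn; rewrite upd_neq.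
have wn := Hw n; have dn := Hd n; have tn := Ht0 n.
have [ph0|ph0] := eqVneq (phis n) 0.
  have := Ft (taus n / 2); rewrite ph0 !mul0r !addr0.
  have : 0 < taus n / 2 by rewrite divr_gt0.
  nra.
have php : 0 < phis n by rewrite lt_def ph0 phis_ge0.
have q : 0 < phis n * d n / w n by rewrite divr_gt0 // mulr_gt0.
set t0 := Num.sqrt (phis n * d n / w n).
have t0p : 0 < t0 by rewrite sqrtr_gt0.
have t0s : t0 ^+ 2 = phis n * d n / w n by rewrite sqr_sqrtr // ltW.
have pd : phis n * (d n / taus n) = w n * t0 ^+ 2 / taus n.
  by rewrite t0s; field; rewrite !lt0r_neq0.
have pd' : phis n * (d n / t0) = w n * t0.
  have -> : w n * t0 = w n * t0 ^+ 2 / t0 by field; rewrite lt0r_neq0.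
  by rewrite t0s; field; rewrite !lt0r_neq0.
have := Ft t0 t0p; rewrite pd pd' => H.
have E : w n * (taus n - t0) ^+ 2 / taus n = w n * taus n + w n * t0 ^+ 2 / taus n - 2 * (w n * t0).
  by field; rewrite lt0r_neq0.
have H2 : w n * (taus n - t0) ^+ 2 / taus n <= 0 by rewrite E; lra.
have H3 : (taus n - t0) ^+ 2 <= 0.
  rewrite -(pmulr_rle0 _ (divr_gt0 wn tn)).
  have -> : w n / taus n * (taus n - t0) ^+ 2 = w n * (taus n - t0) ^+ 2 / taus n by rewrite mulrAC.
  exact: H2.
have H4 : (taus n - t0) ^+ 2 = 0 by apply/eqP; rewrite eq_le H3 sqr_ge0.
by move/eqP: H4; rewrite expf_eq0 /= subr_eq0 => /eqP.
Qed.

Lemma b_res n : etas = phis n * sg n (bs n).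
Proof.
have bn := bs_pos n.
have Fb : forall x, 0 < x -> etas * bs n - phis n * KK * rr (aa n) (bs n) <=
                              etas * x - phis n * KK * rr (aa n) x.
  move=> x x0.
  have Hu : forall k, 0 <= upd bs n x k.
    by move=> k; rewrite /upd; case: ifP => _; [lra | exact: Hb0].
  have := @Lmin n (upd bs n x) taus Hu Ht0.
  rewrite !lagr_sum.
  rewrite (@sum_change _ _ (fun k => w k * taus k + phis k * (d k / taus k - rt k (bs k)) + etas * bs k)
     (fun k => w k * taus k + phis k * (d k / taus k - rt k (upd bs n x k)) + etas * upd bs n x k) n).
  - rewrite upd_eq (rt_rr n x (ltW x0)) (rt_rr n (bs n) (ltW bn)); lra.
  - by move=> k kn; rewrite upd_neq.
pose G := fun y => etas * y - (phis n * KK) * rr (aa n) y.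
have HD : forall x, 0 < x < bs n + 1 -> is_derive x 1 G (etas - (phis n * KK) * sa (aa n) x).
  move=> x /andP[x0 _]; exact: (@der_lin_rr _ (aa n) etas (phis n * KK) x (aa_pos n) x0).
have E := @fermat _ G 0 (bs n + 1) (bs n) (etas - (phis n * KK) * sa (aa n) (bs n)).
have : etas - (phis n * KK) * sa (aa n) (bs n) = 0.
  apply: E.
  - by move=> t /HD H; apply: ex_derive.
  - by apply/andP; split; lra.
  - by apply: HD; apply/andP; split; lra.
  - move=> t /andP[t0 _]; have := Fb t t0; rewrite /G /=; lra.
rewrite /sg; lra.
Qed.
End Main.

Lemma formula (R : realType) (W dl2 P b ph e : R) : 0 < W -> 0 < dl2 -> 0 < P -> 0 < b -> 0 < ph ->
  e = ph * (W / ln 2 * sa (P / (W * dl2)) b) ->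
  b = - P / (W * dl2 * (1 + (LambertW (- (expR (e * ln 2 / (ph * W) + 1))^-1))^-1)).
Proof.
move=> W0 d0 P0 b0 ph0 He.
set A := P / (W * dl2).
have A0 : 0 < A by rewrite /A divr_gt0 // mulr_gt0.
have l2 : 0 < ln (2:R) by apply: ln_gt0; lra.
have c : e * ln 2 / (ph * W) = sa A b.
  by rewrite He; field; rewrite !lt0r_neq0.
set v := - (b / (b + A)).
have v1 : -1 <= v.
  rewrite /v lerN2 ler_pdivrMr; lra.
have X : - (expR (sa A b + 1))^-1 = v * expR v.
  have -> : sa A b + 1 = ln (b + A) - ln b + b / (b + A).
    by rewrite /sa; field; rewrite lt0r_neq0 //; lra.
  rewrite !expRD expRN !lnK ?posrE //; last lra.
  rewrite /v expRN.
  field; rewrite !lt0r_neq0 ?expR_gt0 //; lra.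
rewrite c X LambertW_eq //.
have vinv : v^-1 = - ((b + A) / b) by rewrite /v invrN invf_div.
rewrite vinv.
have D : W * dl2 * (1 + - ((b + A) / b)) = - P / b.
  by rewrite /A; field; rewrite !lt0r_neq0.
rewrite D; field; rewrite !lt0r_neq0 //.
Qed.

Theorem proposition1 (R : realType) (N : nat) (W dl2 : R)
  (p h d w : 'I_N -> R)
  (HW : 0 < W) (Hdl2 : 0 < dl2)
  (Hp : forall n, 0 < p n) (Hh : forall n, 0 < h n)
  (Hd : forall n, 0 < d n) (Hw : forall n, 0 < w n)
  (bs taus phis : 'I_N -> R) (etas : R) :
  primal_optimal W dl2 p h d w bs taus ->
  dual_optimal W dl2 p h d w phis etas ->
  forall n : 'I_N,
    taus n = Num.sqrt (phis n * d n / w n) /\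
    bs n = - (p n * h n) /
           (W * dl2 * (1 + (LambertW (- (expR (etas * ln 2 / (phis n * W) + 1))^-1))^-1)).
Proof.
move=> Hopt Hdual n.
have Et := @tau_res _ _ _ _ _ _ _ _ HW Hdl2 Hp Hh Hd Hw _ _ Hopt _ _ Hdual n.
split; first exact: Et.
have Eb := @b_res _ _ _ _ _ _ _ _ HW Hdl2 Hp Hh Hd Hw _ _ Hopt _ _ Hdual n.
have bn := @bs_pos _ _ _ _ _ _ _ _ Hd _ _ Hopt n.
have tn := @Ht0 _ _ _ _ _ _ _ _ _ _ Hopt n.
have php : 0 < phis n.
  have : 0 < phis n * d n / w n by rewrite -sqrtr_gt0 -Et.
  by rewrite pmulr_lgt0 ?invr_gt0 // pmulr_lgt0.
apply: formula => //; try by rewrite mulr_gt0.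
Qed.
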